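(* Let $n\geq 2$, $m_*<m<1$, $c>0$, let $\omega\in\mathbb{R}^n$ be a unit vector and $a:=c\omega$. Define \[ \varphi(y):=A\,(|a||y|+a\cdot y)^{-\frac{1}{1-m}},\qquad A:=\left(\frac{(n-1)m}{1-m}\left(m-\frac{n-3}{n-1}\right)\right)^{\frac{1}{1-m}}, \] for $y\in\mathbb{R}^n\setminus\{-\lambda\omega;\lambda\geq 0\}$. Then on this set \[ \Delta\varphi^m=-a\cdot\nabla\varphi=\frac{A}{1-m}\frac{|a|}{|y|}(|a||y|+a\cdot y)^{-\frac{1}{1-m}}\geq 0, \] so $\varphi$ is a stationary solution of $v_t=\Delta v^m+a\cdot\nabla v$; consequently $u(x,t):=\varphi(x-ta)$ solves $u_t=\Delta u^m$ for $x\notin\{s\omega;-\infty<s\leq ct\}$, and is singular on that set. Moreover, for every $0<\gamma<1$, $(1+\gamma)\varphi(x-ta)$ is a super-solution and $(1-\gamma)\varphi(x-ta)$ is a sub-solution of $u_t=\Delta u^m$ on the same set.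
   Context: $m_*:=0$ if $n=2$ and $m_*:=\frac{n-3}{n-1}$ if $n\geq 3$. Super-/sub-solution means $u_t\geq\Delta u^m$ (resp. $\leq$) pointwise. *)

(* Defs.v *)
From HB Require Import structures.
From mathcomp Require Import all_boot all_order all_algebra.
From mathcomp Require Import all_classical all_reals all_analysis.
Set Implicit Arguments. Unset Strict Implicit. Unset Printing Implicit Defensive.
Import Order.TTheory GRing.Theory Num.Theory.
Import numFieldNormedType.Exports.
Local Open Scope classical_set_scope.
Local Open Scope ring_scope.

Section Defs.
Context {R : realType}.

Definition dot n (x y : 'rV[R]_n) : R := \sum_(i < n) x 0 i * y 0 i.
Definition enorm n (x : 'rV[R]_n) : R := Num.sqrt (dot x x).

Definition ev n (i : 'I_n) : 'rV[R]_n := delta_mx 0 i.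

Definition grad n (f : 'rV[R]_n -> R) (x : 'rV[R]_n) : 'rV[R]_n :=
  \row_(i < n) 'D_(ev i) f x.
Definition lap n (f : 'rV[R]_n -> R) (x : 'rV[R]_n) : R :=
  \sum_(i < n) 'D_(ev i) ('D_(ev i) f) x.

(* f has first partials near x and second pure partials at x,
   so that [lap f x] is the classical Laplacian *)
Definition lap_ok n (f : 'rV[R]_n -> R) (x : 'rV[R]_n) : Prop :=
  forall i : 'I_n, (\forall z \near x, derivable f z (ev i)) /\
                   derivable ('D_(ev i) f) x (ev i).

Definition mstar (n : nat) : R :=
  if n == 2%N then 0 else (n%:R - 3) / (n%:R - 1).

Definition Aconst (n : nat) (m : R) : R :=
  ((n%:R - 1) * m / (1 - m) * (m - (n%:R - 3) / (n%:R - 1))) `^ (1 / (1 - m)).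

Definition phi_fun n (m : R) (a : 'rV[R]_n) (y : 'rV[R]_n) : R :=
  Aconst n m * (enorm a * enorm y + dot a y) `^ (- (1 / (1 - m))).

Definition pme_sol n (m : R) (u : 'rV[R]_n -> R -> R) x t : Prop :=
  derivable (fun s : R => u x s) t 1 /\ lap_ok (fun z => u z t `^ m) x /\
  'D_1 (fun s : R => u x s) t = lap (fun z => u z t `^ m) x.
Definition pme_super n (m : R) (u : 'rV[R]_n -> R -> R) x t : Prop :=
  derivable (fun s : R => u x s) t 1 /\ lap_ok (fun z => u z t `^ m) x /\
  'D_1 (fun s : R => u x s) t >= lap (fun z => u z t `^ m) x.
Definition pme_sub n (m : R) (u : 'rV[R]_n -> R -> R) x t : Prop :=
  derivable (fun s : R => u x s) t 1 /\ lap_ok (fun z => u z t `^ m) x /\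
  'D_1 (fun s : R => u x s) t <= lap (fun z => u z t `^ m) x.
End Defs.

(* Main.v *)
Require Import Defs.
From HB Require Import structures.
From mathcomp Require Import all_boot all_order all_algebra.
From mathcomp Require Import all_classical all_reals all_analysis.
From mathcomp Require Import ring lra.
Import Order.TTheory GRing.Theory Num.Theory.
Import numFieldNormedType.Exports.
Local Open Scope classical_set_scope.
Local Open Scope ring_scope.
Set Implicit Arguments. Unset Strict Implicit. Unset Printing Implicit Defensive.


Section Gen.
Context {R : realType} {V : normedModType R}.

Lemma deriveline (f : V -> R) x v :
  'D_v f x = 'D_1 (fun h : R => f (h *: v + x)) 0.
Proof.
rewrite /derive; set g1 := fun h => h^-1 *: _; set g2 := fun h => h^-1 *: _.
suff -> : g1 = g2 by [].
by rewrite funeqE /g1 /g2 => h /=; rewrite addr0 scale0r add0r [_%:A]mulr1.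
Qed.

Lemma is_derive_line (f : V -> R) x v df :
  is_derive (0:R) 1 (fun h : R => f (h *: v + x)) df -> is_derive x v f df.
Proof.
move=> [d1 d2]; split; first exact/derivable1P.
by rewrite deriveline.
Qed.

Lemma is_derive_comp1 (f : V -> R) (g : R -> R) x v df dg :
  is_derive x v f df -> is_derive (f x) 1 g dg ->
  is_derive x v (g \o f) (dg * df).
Proof.
move=> [fd fv] [gd gv].
have kd : derivable (fun h : R => f (h *: v + x)) 0 1.
  exact: (proj1 (derivable1P _ _ _) fd).
have k0 : (fun h : R => f (h *: v + x)) 0 = f x.
  by rewrite scale0r add0r.
have gd' : derivable g ((fun h : R => f (h *: v + x)) 0) 1 by rewrite k0.
have dc : differentiable (g \o (fun h : R => f (h *: v + x))) 0.
  apply: differentiable_comp.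
    exact: (proj1 (derivable1_diffP _ _) kd).
  exact: (proj1 (derivable1_diffP _ _) gd').
apply: is_derive_line; split.
  exact: (proj2 (derivable1_diffP _ _) dc).
have := derive1_comp kd gd'; rewrite !derive1E => ->.
by rewrite k0 gv -deriveline fv.
Qed.

Lemma isdval (f : V -> R) x v df df' : is_derive x v f df -> df = df' -> is_derive x v f df'.
Proof. by move=> h <-. Qed.

Lemma isdD (f g : V -> R) x v df dg : is_derive x v f df -> is_derive x v g dg ->
  is_derive x v (fun z => f z + g z) (df + dg).
Proof. by move=> h1 h2; exact: is_deriveD. Qed.

Lemma isdM (f g : V -> R) x v df dg : is_derive x v f df -> is_derive x v g dg ->
  is_derive x v (fun z => f z * g z) (df * g x + f x * dg).
Proof.
move=> h1 h2; have := @is_deriveM R V f g x v df dg h1 h2.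
move=> h; apply: is_derive_eq.
by rewrite addrC; congr (_ + _); rewrite mulrC.
Qed.

Lemma isdC (k : R) x v : is_derive x v (fun _ : V => k) 0.
Proof. exact: is_derive_cst. Qed.

Lemma isdZ (f : V -> R) (k : R) x v df : is_derive x v f df ->
  is_derive x v (fun z => k * f z) (k * df).
Proof.
move=> h; apply: (isdval (isdM (isdC k x v) h)).
by rewrite mul0r add0r.
Qed.

Lemma isdV (f : V -> R) x v df : f x != 0 -> is_derive x v f df ->
  is_derive x v (fun z => (f z)^-1) (- (f x)^-2 * df).
Proof.
move=> h [d1 d2]; split; first exact: derivableV.
by rewrite deriveV // d2.
Qed.

Lemma isdeq (f g : V -> R) x v df : f = g -> is_derive x v f df -> is_derive x v g df.
Proof. by move=> ->. Qed.


End Gen.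

Lemma isd_id {R : realType} (x : R) : is_derive x 1 (fun h : R => h) 1.
Proof. exact: is_derive_id. Qed.



Section Conc.
Context {R : realType} {n : nat}.
Implicit Types x y z v b : 'rV[R]_n.

Lemma dotC x y : dot x y = dot y x.
Proof. by apply: eq_bigr => i _; rewrite mulrC. Qed.

Lemma dotDr x y z : dot x (y + z) = dot x y + dot x z.
Proof. by rewrite /dot -big_split; apply: eq_bigr => i _; rewrite mxE mulrDr. Qed.

Lemma dotZr x k y : dot x (k *: y) = k * dot x y.
Proof. by rewrite /dot mulr_sumr; apply: eq_bigr => i _; rewrite mxE mulrCA. Qed.

Lemma dotDl x y z : dot (y + z) x = dot y x + dot z x.
Proof. by rewrite dotC dotDr !(dotC x). Qed.

Lemma dotZl x k y : dot (k *: y) x = k * dot y x.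
Proof. by rewrite dotC dotZr dotC. Qed.

Lemma dotNr x y : dot x (- y) = - dot x y.
Proof. by rewrite -scaleN1r dotZr mulN1r. Qed.

Lemma dot0r x : dot x 0 = 0.
Proof. by rewrite /dot big1 // => i _; rewrite mxE mulr0. Qed.

Lemma dot_ev z i : dot z (ev i) = z 0 i.
Proof.
rewrite /dot (bigD1 i) //= big1 ?addr0.
  by rewrite /ev mxE !eqxx mulr1.
by move=> j ji; rewrite /ev mxE (negbTE ji) andbF mulr0.
Qed.

Lemma ev_ev (i : 'I_n) : dot (ev i) (ev i) = 1 :> R.
Proof. by rewrite dot_ev /ev mxE !eqxx. Qed.

Lemma dot_ge0 x : 0 <= dot x x.
Proof. by apply: sumr_ge0 => i _; rewrite -expr2 sqr_ge0. Qed.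

Lemma dot_eq0 x : dot x x = 0 -> x = 0.
Proof.
move/eqP; rewrite psumr_eq0; last by move=> i _; rewrite -expr2 sqr_ge0.
move/allP => h; apply/rowP => i; rewrite mxE.
have := h i (mem_index_enum i); rewrite /= -expr2 sqrf_eq0 => /eqP //.
Qed.

Lemma enorm_ge0 x : 0 <= enorm x.
Proof. exact: sqrtr_ge0. Qed.

Lemma enorm_sq x : enorm x ^+ 2 = dot x x.
Proof. by rewrite sqr_sqrtr // dot_ge0. Qed.

Lemma enorm0 : enorm (0 : 'rV[R]_n) = 0.
Proof. by rewrite /enorm dot0r sqrtr0. Qed.

Lemma enormZ k x : enorm (k *: x) = `|k| * enorm x.
Proof.
rewrite /enorm dotZl dotZr mulrA -expr2 sqrtrM ?sqr_ge0 //.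
by rewrite sqrtr_sqr.
Qed.

Lemma enorm_gt0 x : 0 < dot x x -> 0 < enorm x.
Proof. by move=> h; rewrite sqrtr_gt0. Qed.

End Conc.


Section Conc.
Context {R : realType} {n : nat}.
Implicit Types x y z v b : 'rV[R]_n.

Lemma isd_aff (k c : R) : is_derive (0:R) 1 (fun h : R => h * k + c) k.
Proof.
have h := (isdD (isdM (isd_id 0) (isdC k (0:R) (1:R))) (isdC c (0:R) (1:R))).
rewrite /= mul1r mul0r !addr0 in h.
exact: h.
Qed.

Lemma isd_dot b z v : is_derive z v (fun z => dot b z) (dot b v).
Proof.
apply: is_derive_line.
apply: (isdeq _ (isd_aff (dot b v) (dot b z))).
by apply: funext => h; rewrite dotDr dotZr.
Qed.

Lemma isd_dotr b z v : is_derive z v (fun z => dot z b) (dot v b).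
Proof.
rewrite dotC; apply: (isdeq _ (isd_dot b z v)).
by apply: funext => w; rewrite dotC.
Qed.

Lemma isd_dot2 z v : is_derive z v (fun z => dot z z) (2 * dot z v).
Proof.
apply: is_derive_line.
have h1 := isdM (isd_aff (dot v v) (2 * dot z v)) (isd_id (0:R)).
have h2 := isdD h1 (isdC (dot z z) (0:R) (1:R)).
have e : (fun h : R => dot (h *: v + z) (h *: v + z)) =
  (fun h : R => (h * dot v v + 2 * dot z v) * h + dot z z).
  apply: funext => k; rewrite !dotDl !dotDr !dotZl !dotZr (dotC z v).
  move: (dot v v) (dot v z) (dot z z) => A B C; ring.
rewrite e; apply: (isdval h2).
by rewrite /= !mul0r !mulr0 !add0r addr0 mulr1.
Qed.

Lemma isd_norm z v : 0 < dot z z ->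
  is_derive z v (fun z => enorm z) (dot z v / enorm z).
Proof.
move=> hz.
have hs : is_derive (dot z z) 1 (@Num.sqrt R) (2 * Num.sqrt (dot z z))^-1.
  exact: is_derive1_sqrt.
have h := @is_derive_comp1 R _ (fun z => dot z z) (@Num.sqrt R) z v _ _ (isd_dot2 z v) hs.
apply: (isdval h).
have hN := enorm_gt0 hz.
rewrite -/(enorm z); move: hN; move: (enorm z) (dot z v) => N B hN.
by field; rewrite gt_eqF.
Qed.

End Conc.


Section Conc.
Context {R : realType} {n : nat}.
Implicit Types x y z v b : 'rV[R]_n.

Lemma diff_dot b y : differentiable (fun z : 'rV[R]_n => dot b z) y.
Proof.
have e : (fun z : 'rV[R]_n => dot b z) =
   \sum_(i < n) (fun z : 'rV[R]_n => b 0 i * z 0 i).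
  by rewrite fct_sumE; apply: funext => z.
rewrite e; apply: differentiable_sum => i.
apply: differentiableM; first exact: differentiable_cst.
exact: differentiable_coord.
Qed.

Lemma diff_dot2 y : differentiable (fun z : 'rV[R]_n => dot z z) y.
Proof.
have e : (fun z : 'rV[R]_n => dot z z) =
   \sum_(i < n) (fun z : 'rV[R]_n => z 0 i * z 0 i).
  by rewrite fct_sumE; apply: funext => z.
rewrite e; apply: differentiable_sum => i.
by apply: differentiableM; exact: differentiable_coord.
Qed.

Lemma diff_norm y : 0 < dot y y -> differentiable (fun z : 'rV[R]_n => enorm z) y.
Proof.
move=> hy.
have hs : is_derive (dot y y) 1 (@Num.sqrt R) (2 * Num.sqrt (dot y y))^-1.
  exact: is_derive1_sqrt.
have [hd _] := hs.
have ds := proj1 (derivable1_diffP _ _) hd.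
exact: (differentiable_comp (diff_dot2 y) ds).
Qed.

End Conc.


Section Conc.
Context {R : realType} {n : nat}.
Implicit Types x y z v b : 'rV[R]_n.
Variable a : 'rV[R]_n.

Definition GG z := enorm a * enorm z + dot a z.
Definition dG z v := enorm a * (dot z v / enorm z) + dot a v.

Lemma GG_dot z : 0 < GG z -> 0 < dot z z.
Proof.
move=> h; rewrite lt_neqAle dot_ge0 andbT; apply/eqP => /esym /dot_eq0 z0.
by move: h; rewrite /GG z0 enorm0 dot0r mulr0 addr0 ltxx.
Qed.

Lemma isd_G z v : 0 < dot z z -> is_derive z v GG (dG z v).
Proof.
move=> hz; exact: (isdD (isdZ (enorm a) (isd_norm v hz)) (isd_dot a z v)).
Qed.

Lemma diff_G y : 0 < dot y y -> differentiable GG y.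
Proof.
move=> hy; apply: differentiableD; last exact: diff_dot.
apply: differentiableM; first exact: differentiable_cst.
exact: diff_norm.
Qed.

Lemma near_G y : 0 < GG y -> \forall z \near y, 0 < GG z.
Proof.
move=> hy; have c := differentiable_continuous (diff_G (GG_dot hy)).
have := @cvgr_gt R _ _ _ GG (GG y) c 0 hy; apply; exact: nbhs_filter.
Qed.

Lemma isd_powG k e z v : 0 < GG z ->
  is_derive z v (fun z => k * GG z `^ e) (k * (e * GG z `^ (e - 1) * dG z v)).
Proof.
move=> hz.
have hp : is_derive (GG z) 1 (@powR R ^~ e) (e * GG z `^ (e - 1)) by exact: is_derive1_powR.
have h := is_derive_comp1 (isd_G v (GG_dot hz)) hp.
exact: (isdZ k h).
Qed.

End Conc.


Section Conc.
Context {R : realType} {n : nat}.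
Implicit Types x y z v b : 'rV[R]_n.
Variable a : 'rV[R]_n.

Lemma isd_H i z v : 0 < dot z z ->
  is_derive z v (fun z => dG a z (ev i))
   (enorm a * (dot v (ev i) * (enorm z)^-1 +
      dot z (ev i) * (- (enorm z) ^- 2 * (dot z v / enorm z))) + 0).
Proof.
move=> hz.
have hN : enorm z != 0 by rewrite gt_eqF // enorm_gt0.
exact: (isdD (isdZ (enorm a) (isdM (isd_dotr (ev i) z v) (isdV hN (isd_norm v hz))))
  (isdC (dot a (ev i)) z v)).
Qed.

Lemma sum4 (al be ga de : R) y :
  \sum_(i < n) (al * (y 0 i * y 0 i) + be * (a 0 i * y 0 i) + ga * (a 0 i * a 0 i) + de)
  = al * dot y y + be * dot a y + ga * dot a a + n%:R * de.
Proof.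
rewrite !big_split /= -!mulr_sumr sumr_const card_ord mulr_natl.
by rewrite /dot.
Qed.

Lemma lap_powG k e y : 0 < GG a y ->
  lap_ok (fun z => k * GG a z `^ e) y /\
  lap (fun z => k * GG a z `^ e) y =
    k * e * GG a y `^ (e - 1) * enorm a / enorm y * (2 * (e - 1) + n%:R - 1).
Proof.
move=> hy.
have hyd := GG_dot hy.
have nG := near_G hy.
set F := fun z => k * GG a z `^ e.
have D1 : forall i : 'I_n, \forall z \near y,
    k * (e * GG a z `^ (e - 1) * dG a z (ev i)) = 'D_(ev i) F z.
  move=> i; near=> z.
  have hz : 0 < GG a z by near: z.
  by have [_ ->] := isd_powG k e (ev i) hz.
have D2 : forall i : 'I_n, is_derive y (ev i)
    (fun z => k * (e * GG a z `^ (e - 1) * dG a z (ev i)))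
    ((k * e) * ((e - 1) * GG a y `^ (e - 1 - 1) * dG a y (ev i)) * dG a y (ev i)
     + (k * e) * GG a y `^ (e - 1) *
      (enorm a * (dot (ev i) (ev i) * (enorm y)^-1 +
      dot y (ev i) * (- (enorm y) ^- 2 * (dot y (ev i) / enorm y))) + 0)).
  move=> i.
  have h := isdM (isd_powG (k * e) (e - 1) (ev i) hy) (isd_H i (ev i) hyd).
  apply: (isdeq _ h); apply: funext => z; by rewrite !mulrA.
split.
  move=> i; split.
    near=> z; have hz : 0 < GG a z by near: z.
    by have [] := isd_powG k e (ev i) hz.
  have [d _] := D2 i; exact: (near_eq_derivable (D1 i) d).
have hN : 0 < enorm y := enorm_gt0 hyd.
have hGy : GG a y != 0 by rewrite gt_eqF.
have pe : GG a y `^ (e - 1 - 1) = GG a y `^ (e - 1) * (GG a y)^-1.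
  rewrite -powR_inv1 ?ltW // -powRD ?hGy ?implybT //.
set P := GG a y `^ (e - 1).
set N := enorm y.
set ca := enorm a.
pose al := k * e * ((e - 1) * P * (GG a y)^-1 * ca ^+ 2 * N^-1 ^+ 2 - P * ca * N^-1 ^+ 3).
pose be := k * e * (e - 1) * P * (GG a y)^-1 * 2 * ca * N^-1.
pose ga := k * e * (e - 1) * P * (GG a y)^-1.
pose de := k * e * P * ca * N^-1.
rewrite /lap (eq_bigr (fun i : 'I_n => al * (y 0 i * y 0 i) + be * (a 0 i * y 0 i)
   + ga * (a 0 i * a 0 i) + de)); last first.
  move=> i _.
  rewrite -(near_eq_derive _ (D1 i)).
  have [_ ->] := D2 i.
  rewrite /dG ev_ev !dot_ev pe /al /be /ga /de -/P -/N -/ca.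
  clear al be ga de.
  move: hN hGy; rewrite -/N.
  move: (y 0 i) (a 0 i) P N ca (GG a y) => Y A P' N' ca' G' hN' hG'.
  by field; rewrite hG' gt_eqF.
rewrite sum4 -!enorm_sq -/N -/ca /al /be /ga /de.
have eG : GG a y = ca * N + dot a y by [].
move: hGy hN; rewrite eG -/N; clear al be ga de eG.
move: P N ca (dot a y) => P' N' ca' Ay hG' hN'.
by field; rewrite hG' gt_eqF.
Unshelve. all: by end_near.
Qed.

End Conc.


Section Conc.
Context {R : realType} {n : nat}.
Implicit Types x y z v b : 'rV[R]_n.

Lemma trans_D (f : 'rV[R]_n -> R) b v z :
  'D_v (fun w => f (w + b)) z = 'D_v f (z + b).
Proof.
rewrite deriveline [RHS]deriveline; congr (derive _ (0:R) (1:R)); apply: funext => h; by rewrite addrA.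
Qed.

Lemma trans_derivable (f : 'rV[R]_n -> R) b v z :
  derivable f (z + b) v -> derivable (fun w => f (w + b)) z v.
Proof.
move=> hd; apply/derivable1P; move/derivable1P: hd => hd.
have -> : (fun h : R => f (h *: v + z + b)) = (fun h : R => f (h *: v + (z + b))).
  by apply: funext => h; rewrite addrA.
exact: hd.
Qed.

Lemma trans_lap (f : 'rV[R]_n -> R) b x :
  lap (fun w => f (w + b)) x = lap f (x + b).
Proof.
rewrite /lap; apply: eq_bigr => i _.
have -> : (fun z => 'D_(ev i) (fun w => f (w + b)) z) =
    (fun z => 'D_(ev i) f (z + b)).
  by apply: funext => z; rewrite trans_D.
exact: (trans_D (fun z => 'D_(ev i) f z) b (ev i) x).
Qed.

Lemma trans_near (P : 'rV[R]_n -> Prop) b x :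
  (\forall z \near (x + b), P z) -> \forall z \near x, P (z + b).
Proof.
rewrite (near_shift x); apply: filterS => z /=.
by rewrite addrAC subrr add0r.
Qed.

Lemma trans_lap_ok (f : 'rV[R]_n -> R) b x :
  lap_ok f (x + b) -> lap_ok (fun w => f (w + b)) x.
Proof.
move=> h i; have [h1 h2] := h i; split.
  by apply: filterS (trans_near h1) => z; exact: trans_derivable.
have -> : (fun z => 'D_(ev i) (fun w => f (w + b)) z) =
    (fun z => 'D_(ev i) f (z + b)).
  by apply: funext => z; rewrite trans_D.
exact: (trans_derivable (f := fun z => 'D_(ev i) f z)).
Qed.

End Conc.


Section Conc.
Context {R : realType} {n : nat}.
Implicit Types x y z v b w : 'rV[R]_n.

Lemma cont_norm y : {for y, continuous (fun z : 'rV[R]_n => enorm z)}.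
Proof.
exact: (continuous_comp (differentiable_continuous (diff_dot2 y)) (@sqrt_continuous R _)).
Qed.

Lemma cont_G a y : {for y, continuous (GG a)}.
Proof.
have h1 := cont_norm (y:=y).
have h2 := differentiable_continuous (diff_dot a y).
have h3 : (fun z => enorm a * enorm z) @ y --> enorm a * enorm y.
  have := cvgMl_tmp (a:=enorm a) h1; apply; exact: nbhs_filter.
have := cvgD h3 h2; apply; exact: nbhs_filter.
Qed.

Lemma dot_ww w : enorm w = 1 -> dot w w = 1 :> R.
Proof. by move=> h; rewrite -enorm_sq h expr1n. Qed.

Lemma GG_cw (c : R) w y : enorm w = 1 -> 0 < c ->
  GG (c *: w) y = c * (enorm y + dot w y).
Proof.
move=> hw hc; rewrite /GG enormZ hw mulr1 gtr0_norm // dotZl; ring.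
Qed.

Lemma GG_pos (c : R) w y : enorm w = 1 -> 0 < c ->
  ~ (exists l : R, 0 <= l /\ y = - (l *: w)) -> 0 < GG (c *: w) y.
Proof.
move=> hw hc hy; rewrite GG_cw // pmulr_rgt0 //.
rewrite ltNge; apply/negP => hle; apply: hy.
exists (enorm y); split; first exact: enorm_ge0.
have hq : dot (y + enorm y *: w) (y + enorm y *: w) = 2 * enorm y * (enorm y + dot w y).
  rewrite !dotDl !dotDr !dotZl !dotZr (dot_ww hw) -enorm_sq (dotC y w).
  move: (enorm y) (dot w y) => N B; ring.
have : dot (y + enorm y *: w) (y + enorm y *: w) = 0.
  apply/eqP; rewrite eq_le dot_ge0 andbT hq.
  have := enorm_ge0 y; move: hle; move: (enorm y) (dot w y) => N B.
  by move=> h1 h2; nra.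
move/dot_eq0 => h; apply/eqP; rewrite -subr_eq0 opprK; exact/eqP.
Qed.

Lemma GG_ray (c : R) w l : enorm w = 1 -> 0 < c -> 0 <= l ->
  GG (c *: w) (- (l *: w)) = 0.
Proof.
move=> hw hc hl; rewrite GG_cw // -scaleNr enormZ hw dotZr (dot_ww hw).
by rewrite mulr1 normrN ger0_norm // mulr1 addrN mulr0.
Qed.
End Conc.


Section Conc.
Context {R : realType}.

Definition Kc (n : nat) (m : R) :=
  (n%:R - 1) * m / (1 - m) * (m - (n%:R - 3) / (n%:R - 1)).

Lemma mpos (n : nat) (m : R) : (2 <= n)%N -> mstar n < m ->
  0 < m /\ 0 < m - (n%:R - 3) / (n%:R - 1).
Proof.
move=> hn; rewrite /mstar; case: eqP => [-> | hn2] hm.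
  split => //; rewrite (_ : (2%:R - 3) / (2%:R - 1) = -1 :> R); last first.
    by rewrite -[2%:R]/(1 + 1 : R); field.
  by rewrite opprK; apply: ltr_wpDr.
split; last by rewrite subr_gt0.
apply: le_lt_trans hm; apply: divr_ge0; rewrite subr_ge0.
  have : (3 <= n)%N by rewrite ltn_neqAle eq_sym; apply/andP; split => //; exact/eqP.
  by move=> h3; rewrite (ler_nat R 3 n).
by rewrite (ler_nat R 1 n); apply: leq_trans hn.
Qed.

Lemma Kpos (n : nat) (m : R) : (2 <= n)%N -> mstar n < m -> m < 1 -> 0 < Kc n m.
Proof.
move=> hn hm hm1; have [m0 m1] := mpos hn hm.
rewrite /Kc; apply: mulr_gt0 => //; apply: divr_gt0; last by rewrite subr_gt0.
apply: mulr_gt0 => //; rewrite subr_gt0 (ltr_nat R 1 n); exact: hn.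
Qed.

Lemma Aconst_split (n : nat) (m : R) : (2 <= n)%N -> mstar n < m -> m < 1 ->
  Aconst n m = (Aconst n m) `^ m * Kc n m.
Proof.
move=> hn hm hm1; have hK := Kpos hn hm hm1.
rewrite /Aconst -/(Kc n m) -powRrM.
rewrite -[X in _ = _ * X](powRr1 (ltW hK)) -powRD; last first.
  by apply/implyP => _; rewrite gt_eqF.
congr (_ `^ _); rewrite mulrC; field; rewrite subr_eq0 eq_sym lt_eqF //.
Qed.

Lemma coef_id (n : nat) (m : R) : (2 <= n)%N -> m < 1 ->
  let p := 1 / (1 - m) in
  (- p * m) * (2 * (- p * m - 1) + n%:R - 1) = Kc n m / (1 - m).
Proof.
move=> hn hm1 p; rewrite /p /Kc.
have h1 : 1 - m != 0 by rewrite subr_eq0 eq_sym lt_eqF.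
have h2 : n%:R - 1 != 0 :> R.
  by rewrite subr_eq0 (eqr_nat R n 1); apply/eqP => e; move: hn; rewrite e.
move: h1 h2; move: (n%:R : R) => N h1 h2.
by field; rewrite h1 h2.
Qed.

Lemma expo_id (m : R) : m < 1 -> let p := 1 / (1 - m) in - p * m - 1 = - p.
Proof.
move=> hm1 p; rewrite /p.
have h1 : 1 - m != 0 by rewrite subr_eq0 eq_sym lt_eqF.
by field.
Qed.

End Conc.


Section Conc.
Context {R : realType} {n : nat}.

Lemma is_derive_line_inv (V : normedModType R) (f : V -> R) x v df :
  is_derive x v f df -> is_derive (0:R) 1 (fun h : R => f (h *: v + x)) df.
Proof.
move=> [d1 d2]; split; first exact: (proj1 (derivable1P _ _ _) d1).
by rewrite -deriveline.
Qed.

Lemma lap_scale (f : 'rV[R]_n -> R) (k : R) x : lap_ok f x ->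
  lap_ok (fun z => k * f z) x /\ lap (fun z => k * f z) x = k * lap f x.
Proof.
move=> h.
have E : forall i : 'I_n, \forall z \near x, k * 'D_(ev i) f z = 'D_(ev i) (fun z => k * f z) z.
  move=> i; have [h1 _] := h i; apply: filterS h1 => z dz.
  by have [_ ->] := isdZ k (derivableP dz).
split.
  move=> i; have [h1 h2] := h i; split.
    apply: filterS h1 => z dz; by have [] := isdZ k (derivableP dz).
  have [d _] := isdZ k (derivableP h2).
  exact: (near_eq_derivable (E i) d).
rewrite /lap mulr_sumr; apply: eq_bigr => i _.
have [_ h2] := h i.
rewrite -(near_eq_derive _ (E i)).
by have [_ ->] := isdZ k (derivableP h2).
Qed.

End Conc.



Unset Implicit Arguments.
Theorem mainTheorem2 (R : realType) (n : nat) (m c : R) (w : 'rV[R]_n) :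
  (2 <= n)%N -> @mstar R n < m -> m < 1 -> 0 < c -> enorm w = 1 ->
  let a := c *: w in
  let phi := phi_fun m a in
  let D := [set y : 'rV[R]_n | ~ exists l : R, 0 <= l /\ y = - (l *: w)] in
  let u := fun (x : 'rV[R]_n) (t : R) => phi (x - t *: a) in
  let S := fun t : R => [set x : 'rV[R]_n | exists s : R, s <= c * t /\ x = s *: w] in
  (forall y, D y ->
     (forall i : 'I_n, derivable phi y (ev i)) /\
     lap_ok (fun z => phi z `^ m) y /\
     lap (fun z => phi z `^ m) y = - dot a (grad phi y) /\
     - dot a (grad phi y) =
       Aconst n m / (1 - m) * (enorm a / enorm y) *
         (enorm a * enorm y + dot a y) `^ (- (1 / (1 - m))) /\
     0 <= Aconst n m / (1 - m) * (enorm a / enorm y) *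
         (enorm a * enorm y + dot a y) `^ (- (1 / (1 - m)))) /\
  (forall y, D y -> 0 = lap (fun z => phi z `^ m) y + dot a (grad phi y)) /\
  (forall x t, ~ S t x -> pme_sol m u x t) /\
  (forall x t, S t x -> u z t @[z --> within (~` S t) (nbhs x)] --> +oo) /\
  (forall gam : R, 0 < gam < 1 -> forall x t, ~ S t x ->
     pme_super m (fun z s => (1 + gam) * u z s) x t /\
     pme_sub m (fun z s => (1 - gam) * u z s) x t).
Proof.
move=> hn hm hm1 hc hw a phi D u S.
set p := 1 / (1 - m).
set A := Aconst n m.
have [m0 _] := mpos hn hm.
have hK := Kpos hn hm hm1.
have hA : 0 < A by rewrite /A /Aconst powR_gt0.
have h1m : 0 < 1 - m by rewrite subr_gt0.
have ha : enorm a = c by rewrite /a enormZ hw mulr1 gtr0_norm.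
have phiE : phi = (fun z => A * GG a z `^ (- p)) by [].
have PhiE : (fun z => phi z `^ m) = (fun z => A `^ m * GG a z `^ (- p * m)).
  apply: funext => z; rewrite phiE /= powRM ?powR_ge0 ?(ltW hA) //.
  by rewrite -powRrM.
pose R0 y := A / (1 - m) * (enorm a / enorm y) * GG a y `^ (- p).
have R0ge : forall y, 0 <= R0 y.
  move=> y; rewrite /R0; apply: mulr_ge0; last exact: powR_ge0.
  apply: mulr_ge0; first by apply: divr_ge0; [exact: ltW|exact: ltW].
  by apply: divr_ge0; exact: enorm_ge0.
have key_lap : forall y, 0 < GG a y ->
    lap_ok (fun z => phi z `^ m) y /\ lap (fun z => phi z `^ m) y = R0 y.
  move=> y hy; rewrite PhiE.
  have [ok ->] := lap_powG (A `^ m) (- p * m) hy.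
  split => //.
  have ee : GG a y `^ (- p * m - 1) = GG a y `^ (- p) by rewrite (expo_id hm1).
  have As : A = A `^ m * Kc n m := Aconst_split hn hm hm1.
  have ce : (- p * m) * (2 * (- p * m - 1) + n%:R - 1) = Kc n m / (1 - m)
    := coef_id hn hm1.
  rewrite ee /R0 [in RHS]As.
  move: ce.
  move: (- p * m) (Kc n m) (A `^ m) (GG a y `^ (- p)) (enorm a) (enorm y) => X K B G' ca N ce.
  apply: (@eq_trans _ _ (B * (X * (2 * (X - 1) + n%:R - 1)) * G' * ca / N)).
    by ring.
  by rewrite ce; ring.
have hdphi : forall y v, 0 < GG a y ->
    is_derive y v phi (A * (- p * GG a y `^ (- p - 1) * dG a y v)).
  by move=> y v hy; rewrite phiE; exact: isd_powG.
have Pm1 : forall y, 0 < GG a y -> GG a y `^ (- p - 1) = GG a y `^ (- p) / GG a y.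
  move=> y hy; rewrite -powR_inv1 ?ltW // -powRD //.
  by apply/implyP => _; rewrite gt_eqF.
have AR0 : forall y, R0 y = A * p * (enorm a / enorm y) * GG a y `^ (- p).
  by move=> y; rewrite /R0 /p div1r.
have key_grad : forall y, 0 < GG a y -> - dot a (grad phi y) = R0 y.
  move=> y hy.
  have hyd := GG_dot hy.
  have hN : 0 < enorm y := enorm_gt0 hyd.
  pose P1 := GG a y `^ (- p - 1).
  rewrite /grad /dot (eq_bigr (fun i : 'I_n => 0 * (y 0 i * y 0 i) +
     (A * (- p) * P1 * enorm a / enorm y) * (a 0 i * y 0 i) +
     (A * (- p) * P1) * (a 0 i * a 0 i) + 0)); last first.
    move=> i _; rewrite [(\row__ _) 0 i]mxE; have [_ ->] := hdphi y (ev i) hy.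
    rewrite /dG !dot_ev -/P1.
    move: (a 0 i) (y 0 i) P1 (enorm a) (enorm y) => Ai Yi P' ca N.
    by ring.
  rewrite sum4 -(enorm_sq a) /P1 (Pm1 _ hy) AR0.
  move: (GG a y `^ (- p)) => P'.
  have eG : GG a y = enorm a * enorm y + dot a y by [].
  move: hy hN; rewrite eG.
  move: (enorm a) (enorm y) (dot a y) (dot y y) => ca N Ay Q hG hN'.
  by field; rewrite !gt_eqF.
have key_dt : forall x t, 0 < GG a (x - t *: a) ->
    is_derive t 1 (fun s => phi (x - s *: a)) (R0 (x - t *: a)).
  move=> x t hy; set y := x - t *: a.
  have hyd := GG_dot hy.
  have hN : 0 < enorm y := enorm_gt0 hyd.
  have h := is_derive_line_inv (hdphi y (- a) hy).
  apply: is_derive_line.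
  have -> : (fun h : R => phi (x - (h *: 1 + t) *: a)) =
      (fun h : R => phi (h *: - a + y)).
    apply: funext => k; congr phi.
    rewrite [_%:A]mulr1 scalerDl scalerN /y.
    by rewrite opprD addrCA.
  apply: (isdval h).
  rewrite /dG dotNr dotNr (dotC y a) (Pm1 _ hy) AR0 -(enorm_sq a).
  move: (GG a y `^ (- p)) => P'.
  have eG : GG a y = enorm a * enorm y + dot a y by [].
  move: hy hN; rewrite eG.
  move: (enorm a) (enorm y) (dot a y) => ca N Ay hG hN'.
  by field; rewrite !gt_eqF.
have DG : forall y, D y -> 0 < GG a y by move=> y Dy; exact: GG_pos hw hc Dy.
have SD : forall x t, ~ S t x -> 0 < GG a (x - t *: a).
  move=> x t nS; apply: GG_pos hw hc _ => -[l [hl e]]; apply: nS.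
  exists (c * t - l); split; first by lra.
  have -> : x = (x - t *: a) + t *: a by rewrite subrK.
  by rewrite e /a scalerA scalerBl addrC mulrC.
have Lu : forall x t, ~ S t x ->
    lap_ok (fun z => u z t `^ m) x /\ lap (fun z => u z t `^ m) x = R0 (x - t *: a).
  move=> x t nS; have hy := SD x t nS.
  have [ok el] := key_lap _ hy; split.
    exact: (trans_lap_ok (f := fun z => phi z `^ m) ok).
  by rewrite (trans_lap (fun z => phi z `^ m) (- (t *: a)) x).
split.
  move=> y Dy; have hy := DG y Dy; have [ok el] := key_lap y hy.
  split; first by move=> i; have [] := hdphi y (ev i) hy.
  split => //; split; first by rewrite el key_grad.
  split; first exact: (key_grad y hy).
  exact: R0ge y.
split.
  move=> y Dy; have hy := DG y Dy; have [_ el] := key_lap y hy.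
  by rewrite el -(key_grad y hy) addNr.
split.
  move=> x t nS; have hy := SD x t nS.
  have [dd dv] := key_dt x t hy.
  have [ok el] := Lu x t nS.
  split; first exact: dd.
  by split; last by rewrite dv el.
split.
  move=> x t [s [hs ex]].
  have G0 : GG a (x + - (t *: a)) = 0.
    have -> : x + - (t *: a) = - ((c * t - s) *: w).
      by rewrite ex /a scalerA scalerBl opprB mulrC.
    by apply: GG_ray hw hc _; rewrite subr_ge0.
  apply/cvgryPge => M.
  set M' := Num.max M 1.
  have hM' : 0 < M' by rewrite lt_max ltr01 orbT.
  set del := (A / M') `^ (1 - m).
  have hdel : 0 < del by rewrite powR_gt0 // divr_gt0.
  have near1 : \forall z \near x, GG a (z + - (t *: a)) < del.
    apply: (trans_near (P := fun z => GG a z < del)).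
    have := @cvgr_lt R _ _ _ (GG a) (GG a (x + - (t *: a))) (@cont_G R n a (x + - (t *: a))) del.
    rewrite G0 => h; exact: (h (nbhs_filter _) hdel).
  rewrite near_withinE; apply: filterS near1 => z hz nSz.
  have gz : 0 < GG a (z - t *: a) := SD z t nSz.
  change (M <= A * GG a (z - t *: a) `^ (- p)).
  rewrite powRN.
  set X := GG a (z - t *: a) `^ p.
  have hX : 0 < X by rewrite powR_gt0.
  have hp : 0 <= p by apply: ltW; rewrite /p divr_gt0 // ltr01.
  have Xle : X <= A / M'.
    have := ge0_ler_powR hp (ltW gz) (ltW hdel) (ltW hz).
    have e1 : (1 - m) * p = 1 by rewrite /p mul1r divff // gt_eqF.
    rewrite /del -powRrM e1 powRr1 //.
    by apply: divr_ge0; exact: ltW.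
  have MM : M <= M' by rewrite le_max lexx.
  apply: (le_trans MM).
  rewrite -(ler_pM2r hX) divfK ?gt_eqF //.
  have := ler_wpM2l (ltW hM') Xle.
  by rewrite [M' * (A / M')]mulrC divfK ?gt_eqF.
move=> gam /andP[g0 g1] x t nS.
have hy := SD x t nS; have [ok el] := Lu x t nS.
have L0 := R0ge (x - t *: a).
have upos : forall z s, 0 <= u z s.
  by move=> z s; apply: mulr_ge0; [exact: ltW|exact: powR_ge0].
have gen : forall k, 0 <= k ->
    derivable (fun s => k * u x s) t 1 /\ lap_ok (fun z => (k * u z t) `^ m) x /\
    derive (fun s => k * u x s) t 1 = k * R0 (x - t *: a) /\
    lap (fun z => (k * u z t) `^ m) x = k `^ m * R0 (x - t *: a).
  move=> k k0.
  have scaleE : (fun z => (k * u z t) `^ m) = (fun z => k `^ m * u z t `^ m).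
    by apply: funext => z; rewrite powRM.
  have [ok' el'] := lap_scale (k `^ m) ok.
  have [dd dv] := isdZ k (key_dt x t hy).
  rewrite scaleE el' el; split => //; split => //.
have k1 : 0 <= 1 + gam by rewrite addr_ge0 // ltW.
have [hd1 [ho1 [he1 hl1]]] := gen (1 + gam) k1.
have k2 : 0 <= 1 - gam by rewrite subr_ge0 ltW.
have [hd2 [ho2 [he2 hl2]]] := gen (1 - gam) k2.
split.
  split; first exact: hd1; split; first exact: ho1.
  rewrite he1 hl1; apply: ler_wpM2r => //.
  apply: ler1_powR; last exact: ltW.
  by rewrite lerDl ltW.
split; first exact: hd2; split; first exact: ho2.
rewrite he2 hl2; apply: ler_wpM2r => //.
apply: ger1_powR; last exact: ltW.
by rewrite subr_gt0 g1 /= gerBl ltW.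
Qed.
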